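(* Let $X_1,\dots,X_k$ be normal terms, let $f\in\Sigma_E$ have arity $k$, and let $\Pi$ be a cut-free derivation in $\mathcal S$ of $\Gamma,\downarrow f(X_1,\dots,X_k)\vdash M$. Then there exists a cut-free derivation $\Pi'$ in $\mathcal S$ of $\Gamma,X_1,\dots,X_k\vdash M$.
   Context: Fix names, variables and constructors $\mathsf{pub}$ (unary), $\mathsf{sign},\mathsf{blind},\langle\cdot,\cdot\rangle,\{\cdot\}_\cdot$ (binary). $E$ is the union of AC-convergent equational theories $E_1,\dots,E_n$ with pairwise disjoint signatures, disjoint from the constructors, each with at most one associative-commutative (AC) binary symbol $\oplus_i$; $E$ is presented by a rewrite system $R_E$ terminating and confluent modulo AC; $\Sigma_E$ is its signature. Terms are ground terms over names, the constructors and $\Sigma_E$; $\downarrow N$ is the $R_E$-normal form of $N$ modulo AC, and normal terms are those in normal form. $\equiv$ is equality modulo AC of all $\oplus_i$; $\approx_E$ equality modulo $E$. Guarded term: a name, a variable, or headed by a constructor. $E$-context: term with holes built only from symbols of $\Sigma_E$. Sequents $\Gamma\vdash M$ have all terms in normal form; $\Gamma,M$ means $\Gamma\cup\{M\}$. A derivation is cut-free if it has no instance of (cut). System $\mathcal S$: (id) $\Gamma\vdash M$ with no premise if $M\approx_E C[M_1,\dots,M_k]$ for an $E$-context $C$ and $M_i\in\Gamma$; (cut) from $\Gamma\vdash M$, $\Gamma,M\vdash T$ infer $\Gamma\vdash T$; ($p_L$) from $\Gamma,\langle M,N\rangle,M,N\vdash T$ infer $\Gamma,\langle M,N\rangle\vdash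 T$; ($p_R$) from $\Gamma\vdash M,\Gamma\vdash N$ infer $\Gamma\vdash\langle M,N\rangle$; ($e_L$) from $\Gamma,\{M\}_K\vdash K$ and $\Gamma,\{M\}_K,M,K\vdash N$ infer $\Gamma,\{M\}_K\vdash N$; ($e_R$) from $\Gamma\vdash M,\Gamma\vdash K$ infer $\Gamma\vdash\{M\}_K$; ($\mathsf{sign}_L$) from $\Gamma,\mathsf{sign}(M,K),\mathsf{pub}(L),M\vdash N$ infer $\Gamma,\mathsf{sign}(M,K),\mathsf{pub}(L)\vdash N$ if $K\equiv L$; ($\mathsf{sign}_R$) from $\Gamma\vdash M,\Gamma\vdash K$ infer $\Gamma\vdash\mathsf{sign}(M,K)$; ($\mathsf{blind}_{L1}$) from $\Gamma,\mathsf{blind}(M,K)\vdash K$ and $\Gamma,\mathsf{blind}(M,K),M,K\vdash N$ infer $\Gamma,\mathsf{blind}(M,K)\vdash N$; ($\mathsf{blind}_R$) from $\Gamma\vdash M,\Gamma\vdash K$ infer $\Gamma\vdash\mathsf{blind}(M,K)$; ($\mathsf{blind}_{L2}$) from $\Gamma,\mathsf{sign}(\mathsf{blind}(M,R),K)\vdash R$ and $\Gamma,\mathsf{sign}(\mathsf{blind}(M,R),K),\mathsf{sign}(M,K),R\vdash N$ infer $\Gamma,\mathsf{sign}(\mathsf{blind}(M,R),K)\vdash N$; ($gs$) from $\Gamma\vdash A$, $\Gamma,A\vdash M$ infer $\Gamma\vdash M$ if $A$ is a guarded subterm of a term in $\Gamma\cup\{M\}$. *)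

(* Defs.v *)
From Stdlib Require Import List Relations.
Import ListNotations.
Set Implicit Arguments.

(* Names are represented by natural numbers.  [Enc M K] is {M}_K,
   [Pair M N] is <M,N>.  [App f ts] applies a symbol f of Sigma_E. *)
Inductive term (F : Type) : Type :=
| Name : nat -> term F
| Pub : term F -> term F
| Sign : term F -> term F -> term F
| Blind : term F -> term F -> term F
| Pair : term F -> term F -> term F
| Enc : term F -> term F -> term F
| App : F -> list (term F) -> term F.
Arguments Name {F} _.

(** Patterns over Sigma_E with variables (used for rewrite rules and
    E-contexts, whose holes are the variables). *)
Inductive pat (F : Type) : Type :=
| PVar : nat -> pat F
| PApp : F -> list (pat F) -> pat F.
Arguments PVar {F} _.

Fixpoint inst (F : Type) (s : nat -> term F) (p : pat F) : term F :=
  match p with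
  | PVar i => s i
  | PApp f ps => App f (map (inst s) ps)
  end.

Fixpoint pvars (F : Type) (p : pat F) : list nat :=
  match p with
  | PVar i => [i]
  | PApp _ ps => flat_map (@pvars F) ps
  end.

Fixpoint pall (F : Type) (P : F -> Prop) (p : pat F) : Prop :=
  match p with
  | PVar _ => True
  | PApp f ps => P f /\ fold_right (fun q acc => pall P q /\ acc) True ps
  end.

Record theory := {
  sym : Type;
  ar : sym -> nat;
  isAC : sym -> Prop;
  comp : sym -> nat;                 (* f belongs to the signature of E_(comp f) *)
  rules : pat sym -> pat sym -> Prop
}.

Section Theory.
Variable T : theory.
Notation F := (sym T).
Notation tm := (term F).

Fixpoint wf (t : tm) : Prop :=
  match t with
  | Name _ => True
  | Pub a => wf a
  | Sign a b | Blind a b | Pair a b | Enc a b => wf a /\ wf b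
  | App f ts => length ts = ar T f /\ fold_right (fun u acc => wf u /\ acc) True ts
  end.

Fixpoint wfp (p : pat F) : Prop :=
  match p with
  | PVar _ => True
  | PApp f ps => length ps = ar T f /\ fold_right (fun q acc => wfp q /\ acc) True ps
  end.

Inductive acEq : tm -> tm -> Prop :=
| ac_refl t : acEq t t
| ac_sym t u : acEq t u -> acEq u t
| ac_trans t u v : acEq t u -> acEq u v -> acEq t v
| ac_pub a b : acEq a b -> acEq (Pub a) (Pub b)
| ac_sign a b c d : acEq a b -> acEq c d -> acEq (Sign a c) (Sign b d)
| ac_blind a b c d : acEq a b -> acEq c d -> acEq (Blind a c) (Blind b d)
| ac_pair a b c d : acEq a b -> acEq c d -> acEq (Pair a c) (Pair b d)
| ac_enc a b c d : acEq a b -> acEq c d -> acEq (Enc a c) (Enc b d)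
| ac_app f l a b r : acEq a b -> acEq (App f (l ++ a :: r)) (App f (l ++ b :: r))
| ac_comm f a b : isAC T f -> acEq (App f [a; b]) (App f [b; a])
| ac_assoc f a b c : isAC T f ->
    acEq (App f [a; App f [b; c]]) (App f [App f [a; b]; c]).

Inductive cstep (Rs : pat F -> pat F -> Prop) : tm -> tm -> Prop :=
| cs_root l r s : Rs l r -> cstep Rs (inst s l) (inst s r)
| cs_pub a b : cstep Rs a b -> cstep Rs (Pub a) (Pub b)
| cs_sign1 a b c : cstep Rs a b -> cstep Rs (Sign a c) (Sign b c)
| cs_sign2 a b c : cstep Rs a b -> cstep Rs (Sign c a) (Sign c b)
| cs_blind1 a b c : cstep Rs a b -> cstep Rs (Blind a c) (Blind b c)
| cs_blind2 a b c : cstep Rs a b -> cstep Rs (Blind c a) (Blind c b)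
| cs_pair1 a b c : cstep Rs a b -> cstep Rs (Pair a c) (Pair b c)
| cs_pair2 a b c : cstep Rs a b -> cstep Rs (Pair c a) (Pair c b)
| cs_enc1 a b c : cstep Rs a b -> cstep Rs (Enc a c) (Enc b c)
| cs_enc2 a b c : cstep Rs a b -> cstep Rs (Enc c a) (Enc c b)
| cs_app f l a b r : cstep Rs a b -> cstep Rs (App f (l ++ a :: r)) (App f (l ++ b :: r)).

Definition rstep (Rs : pat F -> pat F -> Prop) (t s : tm) : Prop :=
  exists t' s', acEq t t' /\ cstep Rs t' s' /\ acEq s' s.

Definition terminating_AC (Rs : pat F -> pat F -> Prop) : Prop :=
  well_founded (fun s t => rstep Rs t s).

Definition confluent_AC (Rs : pat F -> pat F -> Prop) : Prop :=
  forall t s1 s2, clos_refl_trans _ (rstep Rs) t s1 ->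
    clos_refl_trans _ (rstep Rs) t s2 ->
    exists u1 u2, clos_refl_trans _ (rstep Rs) s1 u1 /\
      clos_refl_trans _ (rstep Rs) s2 u2 /\ acEq u1 u2.

Definition normal (t : tm) : Prop := forall s, ~ rstep (rules T) t s.
Definition is_nf (t N : tm) : Prop :=
  clos_refl_trans _ (rstep (rules T)) t N /\ normal N.

Definition eqE : tm -> tm -> Prop :=
  clos_refl_sym_trans _ (fun t u => acEq t u \/ cstep (rules T) t u).

Definition admissible : Prop :=
  (forall f, isAC T f -> ar T f = 2) /\
  (forall f g, isAC T f -> isAC T g -> comp T f = comp T g -> f = g) /\
  (forall l r, rules T l r -> wfp l /\ wfp r /\
      exists i, pall (fun f => comp T f = i) l /\ pall (fun f => comp T f = i) r) /\
  terminating_AC (rules T) /\ confluent_AC (rules T).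

Inductive subterm : tm -> tm -> Prop :=
| st_refl t : subterm t t
| st_pub a t : subterm a t -> subterm a (Pub t)
| st_sign1 a t u : subterm a t -> subterm a (Sign t u)
| st_sign2 a t u : subterm a u -> subterm a (Sign t u)
| st_blind1 a t u : subterm a t -> subterm a (Blind t u)
| st_blind2 a t u : subterm a u -> subterm a (Blind t u)
| st_pair1 a t u : subterm a t -> subterm a (Pair t u)
| st_pair2 a t u : subterm a u -> subterm a (Pair t u)
| st_enc1 a t u : subterm a t -> subterm a (Enc t u)
| st_enc2 a t u : subterm a u -> subterm a (Enc t u)
| st_app a f ts t : In t ts -> subterm a t -> subterm a (App f ts).

Definition guarded (t : tm) : Prop :=
  match t with App _ _ => False | _ => True end.

Definition seq_ok (G : list tm) (M : tm) : Prop :=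
  Forall (fun t => wf t /\ normal t) G /\ wf M /\ normal M.

Definition id_cond (G : list tm) (M : tm) : Prop :=
  exists (C : pat F) (s : nat -> tm),
    wfp C /\ (forall i, In i (pvars C) -> In (s i) G) /\ eqE M (inst s C).

(** System S; [deriv false] = cut-free derivability.  A context
    "Γ, X" in a conclusion is any list containing X. *)
Inductive deriv (cut : bool) : list tm -> tm -> Prop :=
| d_id G M : seq_ok G M -> id_cond G M -> deriv cut G M
| d_cut G M N : cut = true -> seq_ok G N ->
    deriv cut G M -> deriv cut (M :: G) N -> deriv cut G N
| d_pL G M N U : seq_ok G U -> In (Pair M N) G ->
    deriv cut (M :: N :: G) U -> deriv cut G U
| d_pR G M N : seq_ok G (Pair M N) ->
    deriv cut G M -> deriv cut G N -> deriv cut G (Pair M N)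
| d_eL G M K N : seq_ok G N -> In (Enc M K) G ->
    deriv cut G K -> deriv cut (M :: K :: G) N -> deriv cut G N
| d_eR G M K : seq_ok G (Enc M K) ->
    deriv cut G M -> deriv cut G K -> deriv cut G (Enc M K)
| d_signL G M K L N : seq_ok G N -> In (Sign M K) G -> In (Pub L) G ->
    acEq K L -> deriv cut (M :: G) N -> deriv cut G N
| d_signR G M K : seq_ok G (Sign M K) ->
    deriv cut G M -> deriv cut G K -> deriv cut G (Sign M K)
| d_blindL1 G M K N : seq_ok G N -> In (Blind M K) G ->
    deriv cut G K -> deriv cut (M :: K :: G) N -> deriv cut G N
| d_blindR G M K : seq_ok G (Blind M K) ->
    deriv cut G M -> deriv cut G K -> deriv cut G (Blind M K)
| d_blindL2 G M R K N : seq_ok G N -> In (Sign (Blind M R) K) G ->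
    deriv cut G R -> deriv cut (Sign M K :: R :: G) N -> deriv cut G N
| d_gs G M A : seq_ok G M -> guarded A ->
    (exists t, (In t G \/ t = M) /\ subterm A t) ->
    deriv cut G A -> deriv cut (A :: G) M -> deriv cut G M.

End Theory.

(* Main.v *)
Require Import Defs.
From Stdlib Require Import List Relations Lia Arith ClassicalEpsilon Classical.
Import ListNotations.

Section S.
Variable T : theory.
Notation F := (sym T).
Notation tm := (term F).
Notation acEq := (acEq T).
Notation eqE := (eqE T).
Notation cstep := (@cstep T).

Fixpoint psubst (s : nat -> pat F) (p : pat F) : pat F :=
  match p with
  | PVar i => s i
  | PApp f ps => PApp f (map (psubst s) ps)
  end.

Fixpoint pat_ind' (P : pat F -> Prop) (HV : forall i, P (PVar i))
  (HA : forall f ps, Forall P ps -> P (PApp f ps)) (p : pat F) : P p :=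
  match p with
  | PVar i => HV i
  | PApp f ps => HA f ps ((fix go ps := match ps return Forall P ps with
        | [] => Forall_nil _ | q :: qs => Forall_cons _ (pat_ind' P HV HA q) (go qs) end) ps)
  end.

Lemma fold_conj_Forall (P : pat F -> Prop) ps :
  fold_right (fun q acc => P q /\ acc) True ps <-> Forall P ps.
Proof. induction ps; simpl; split; intros; auto; [destruct H; constructor; tauto | inversion H; subst; tauto]. Qed.

Lemma fold_conj_Forall_t (P : tm -> Prop) ps :
  fold_right (fun q acc => P q /\ acc) True ps <-> Forall P ps.
Proof. induction ps; simpl; split; intros; auto; [destruct H; constructor; tauto | inversion H; subst; tauto]. Qed.

Lemma inst_psubst (s : nat -> tm) (sg : nat -> pat F) (p : pat F) : inst s (psubst sg p) = inst (fun i => inst s (sg i)) p.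
Proof.
  induction p using pat_ind'; simpl; auto. f_equal. rewrite map_map.
  apply map_ext_in. intros q Hq. rewrite Forall_forall in H. auto.
Qed.

Lemma inst_ext (s s' : nat -> tm) (p : pat F) : (forall i, In i (pvars p) -> s i = s' i) -> inst s p = inst s' p.
Proof.
  induction p using pat_ind'; simpl; intros Hs.
  - apply Hs; auto.
  - f_equal. apply map_ext_in. intros q Hq. rewrite Forall_forall in H. apply H; auto.
    intros i Hi. apply Hs. apply in_flat_map. eauto.
Qed.

Lemma pvars_psubst (sg : nat -> pat F) (p : pat F) j : In j (pvars (psubst sg p)) -> exists i, In i (pvars p) /\ In j (pvars (sg i)).
Proof.
  induction p using pat_ind'; simpl; intros Hj.
  - eauto.
  - apply in_flat_map in Hj as [q [Hq Hjq]]. apply in_map_iff in Hq as [q0 [<- Hq0]].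
    rewrite Forall_forall in H. destruct (H q0 Hq0 Hjq) as [i [Hi Hi']].
    exists i; split; auto. apply in_flat_map; eauto.
Qed.

Lemma wfp_psubst (sg : nat -> pat F) (p : pat F) : wfp T p -> (forall i, wfp T (sg i)) -> wfp T (psubst sg p).
Proof.
  induction p using pat_ind'; simpl; intros Hp Hs; auto.
  destruct Hp as [Hl Hf]. split. rewrite length_map; auto.
  apply fold_conj_Forall. apply fold_conj_Forall in Hf. rewrite Forall_forall in *.
  intros q Hq. apply in_map_iff in Hq as [q0 [<- Hq0]]. auto.
Qed.

Lemma eqE_refl (t : tm) : eqE t t. Proof. apply rst_refl. Qed.
Lemma eqE_sym (t u : tm) : eqE t u -> eqE u t. Proof. apply rst_sym. Qed.
Lemma eqE_trans (t u v : tm) : eqE t u -> eqE u v -> eqE t v. Proof. apply rst_trans. Qed.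
Lemma eqE_ac (t u : tm) : acEq t u -> eqE t u. Proof. intro; apply rst_step; auto. Qed.
Lemma eqE_cs (t u : tm) : cstep (rules T) t u -> eqE t u. Proof. intro; apply rst_step; auto. Qed.

Lemma eqE_app1 (f : F) (l : list tm) (a b : tm) r : eqE a b -> eqE (App f (l ++ a :: r)) (App f (l ++ b :: r)).
Proof.
  induction 1.
  - destruct H; apply rst_step; [left; apply ac_app; auto | right; apply cs_app; auto].
  - apply rst_refl.
  - apply rst_sym; auto.
  - eapply rst_trans; eauto.
Qed.

Lemma eqE_appl (f : F) (l ts us : list tm) : Forall2 eqE ts us -> eqE (App f (l ++ ts)) (App f (l ++ us)).
Proof.
  intros H; revert l; induction H as [|x y xs ys Hxy Hr IH]; intros l.
  - apply eqE_refl.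
  - eapply eqE_trans. apply eqE_app1. eauto.
    replace (l ++ y :: xs) with ((l ++ [y]) ++ xs) by (rewrite <- app_assoc; auto).
    replace (l ++ y :: ys) with ((l ++ [y]) ++ ys) by (rewrite <- app_assoc; auto).
    auto.
Qed.

Lemma inst_eqE (s s' : nat -> tm) (p : pat F) : (forall i, In i (pvars p) -> eqE (s i) (s' i)) -> eqE (inst s p) (inst s' p).
Proof.
  induction p using pat_ind'; simpl; intros Hs.
  - apply Hs; auto.
  - apply (eqE_appl f []). rewrite Forall_forall in H.
    assert (forall q, In q ps -> eqE (inst s q) (inst s' q)).
    { intros q Hq. apply H; auto. intros i Hi. apply Hs. apply in_flat_map; eauto. }
    clear H Hs. induction ps; simpl; constructor; auto with datatypes.
Qed.


Lemma id_mono (G G' : list tm) M : id_cond T G M -> incl G G' -> id_cond T G' M.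
Proof. intros [C [s [H1 [H2 H3]]]] Hi. exists C, s. repeat split; auto. Qed.

Lemma id_eq (G : list tm) M M' : id_cond T G M -> eqE M' M -> id_cond T G M'.
Proof. intros [C [s [H1 [H2 H3]]]] He. exists C, s. repeat split; auto. eapply eqE_trans; eauto. Qed.

Lemma id_mem (G : list tm) t t' : In t' G -> acEq t t' -> id_cond T G t.
Proof.
  intros Hi He. exists (PVar 0), (fun _ => t'). simpl. split; [exact I|split].
  - intros i _; auto.
  - apply eqE_ac; auto.
Qed.

Lemma id_compose (G : list tm) t M : id_cond T (t :: G) M -> id_cond T G t -> id_cond T G M.
Proof.
  intros [C [s [HC [Hs HM]]]] [C0 [s0 [HC0 [Hs0 Ht]]]].
  set (b := S (list_max (pvars C))).
  assert (Hb : forall i, In i (pvars C) -> i < b).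
  { intros i Hi. unfold b. assert (list_max (pvars C) <= list_max (pvars C)) by lia.
    apply list_max_le in H. rewrite Forall_forall in H. specialize (H i Hi). lia. }
  clearbody b.
  set (sg := fun i => if excluded_middle_informative (In (s i) G) then PVar i
                      else psubst (fun j => PVar (b + j)) C0).
  set (s' := fun j => if Nat.ltb j b then s j else s0 (j - b)).
  exists (psubst sg C), s'. split; [|split].
  - apply wfp_psubst; auto. intros i. unfold sg. destruct excluded_middle_informative; simpl; auto.
    apply wfp_psubst; auto. intros; simpl; auto.
  - intros j Hj. apply pvars_psubst in Hj as [i [Hi Hj]]. unfold sg in Hj.
    destruct excluded_middle_informative as [Hin|Hnin].
    + simpl in Hj. destruct Hj as [<-|[]]. unfold s'. specialize (Hb _ Hi).
      destruct (Nat.ltb_spec i b); [auto|lia].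
    + apply pvars_psubst in Hj as [k [Hk Hj]]. simpl in Hj. destruct Hj as [<-|[]].
      unfold s'. destruct (Nat.ltb_spec (b + k) b); [lia|]. replace (b + k - b) with k by lia. auto.
  - eapply eqE_trans; [exact HM|]. rewrite inst_psubst. apply inst_eqE.
    intros i Hi. unfold sg. destruct excluded_middle_informative as [Hin|Hnin].
    + simpl. unfold s'. specialize (Hb _ Hi). destruct (Nat.ltb_spec i b); [apply eqE_refl|lia].
    + rewrite inst_psubst. simpl.
      destruct (Hs i Hi) as [Heq|Hin]; [|contradiction].
      rewrite <- Heq. eapply eqE_trans; [exact Ht|].
      erewrite inst_ext; [apply eqE_refl|]. intros k Hk. simpl. unfold s'.
      destruct (Nat.ltb_spec (b + k) b); [lia|]. replace (b + k - b) with k by lia. auto.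
Qed.

Lemma id_elim (L G : list tm) M : id_cond T (L ++ G) M -> (forall t, In t L -> id_cond T G t) -> id_cond T G M.
Proof.
  induction L as [|a L IH]; simpl; intros H HL; auto.
  apply IH; auto. eapply id_compose; eauto. eapply id_mono; [apply HL; auto|]. intros x Hx; apply in_or_app; auto.
Qed.


Definition shape (t u : tm) : Prop :=
  match t, u with
  | Name n, Name m => n = m
  | Pub a, Pub b => acEq a b
  | Sign a c, Sign b d => acEq a b /\ acEq c d
  | Blind a c, Blind b d => acEq a b /\ acEq c d
  | Pair a c, Pair b d => acEq a b /\ acEq c d
  | Enc a c, Enc b d => acEq a b /\ acEq c d
  | App _ _, App _ _ => True
  | _, _ => False
  end.

Lemma shape_of (t u : tm) : acEq t u -> shape t u.
Proof.
  induction 1; simpl; auto.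
  - destruct t; simpl; auto using ac_refl.
  - destruct t, u; simpl in *; try contradiction; intuition auto using ac_sym.
  - destruct t, u; simpl in *; try contradiction; destruct v; simpl in *; try contradiction;
      intuition eauto using ac_trans; congruence.
Qed.

Lemma guarded_ac (t u : tm) : acEq t u -> guarded T t -> guarded T u.
Proof. intros H; apply shape_of in H; destruct t, u; simpl in *; tauto. Qed.

Lemma wf_ac (t u : tm) : acEq t u -> (wf T t <-> wf T u).
Proof.
  induction 1; simpl; try tauto.
  rewrite !length_app; simpl. rewrite !fold_conj_Forall_t, !Forall_app.
    split; intros [Hl [Hf1 Hf2]]; split; auto; split; auto; inversion Hf2; subst; constructor; tauto.
Qed.

Lemma normal_ac (t u : tm) : acEq t u -> normal T t -> normal T u.
Proof.
  intros H Hn s [t' [s' [H1 [H2 H3]]]]. apply (Hn s). exists t', s'. split; eauto using ac_trans.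
Qed.

Definition ok (t : tm) := wf T t /\ normal T t.

Lemma ok_ac t u : acEq t u -> ok t -> ok u.
Proof. intros H [H1 H2]; split; [apply (wf_ac _ _ H); auto | eapply normal_ac; eauto]. Qed.

Definition stt (x y : tm) := forall A, guarded T A -> subterm T A x -> exists A', subterm T A' y /\ acEq A A'.

Ltac inv H := inversion H; subst; clear H.

Lemma st_transport (x y : tm) : acEq x y -> stt x y /\ stt y x.
Proof.
  induction 1; unfold stt in *.
  - split; intros A _ HA; exists A; split; auto using ac_refl.
  - tauto.
  - destruct IHacEq1 as [A1 A2], IHacEq2 as [B1 B2]. split; intros A HgA HA.
    + destruct (A1 A HgA HA) as [A' [HA' E]]. destruct (B1 A' (guarded_ac _ _ E HgA) HA') as [A'' [? ?]].
      eauto using ac_trans.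
    + destruct (B2 A HgA HA) as [A' [HA' E]]. destruct (A2 A' (guarded_ac _ _ E HgA) HA') as [A'' [? ?]].
      eauto using ac_trans.
  - destruct IHacEq as [A1 A2]; split; intros A HgA HA; inv HA;
      [eexists; split; [apply st_refl|]; apply ac_pub; auto using ac_sym
      | destruct (A1 _ HgA H2) as [A' [? ?]]; eauto using st_pub
      | eexists; split; [apply st_refl|]; apply ac_pub; auto using ac_sym
      | destruct (A2 _ HgA H2) as [A' [? ?]]; eauto using st_pub].
  - destruct IHacEq1 as [A1 A2], IHacEq2 as [B1 B2]; split; intros A HgA HA; inv HA;
      try (eexists; split; [apply st_refl|]; apply ac_sign; auto using ac_sym; fail);
      [ destruct (A1 _ HgA H3) as [A' [? ?]] | destruct (B1 _ HgA H3) as [A' [? ?]]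
      | destruct (A2 _ HgA H3) as [A' [? ?]] | destruct (B2 _ HgA H3) as [A' [? ?]]];
      eauto using st_sign1, st_sign2.
  - destruct IHacEq1 as [A1 A2], IHacEq2 as [B1 B2]; split; intros A HgA HA; inv HA;
      try (eexists; split; [apply st_refl|]; apply ac_blind; auto using ac_sym; fail);
      [ destruct (A1 _ HgA H3) as [A' [? ?]] | destruct (B1 _ HgA H3) as [A' [? ?]]
      | destruct (A2 _ HgA H3) as [A' [? ?]] | destruct (B2 _ HgA H3) as [A' [? ?]]];
      eauto using st_blind1, st_blind2.
  - destruct IHacEq1 as [A1 A2], IHacEq2 as [B1 B2]; split; intros A HgA HA; inv HA;
      try (eexists; split; [apply st_refl|]; apply ac_pair; auto using ac_sym; fail);
      [ destruct (A1 _ HgA H3) as [A' [? ?]] | destruct (B1 _ HgA H3) as [A' [? ?]]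
      | destruct (A2 _ HgA H3) as [A' [? ?]] | destruct (B2 _ HgA H3) as [A' [? ?]]];
      eauto using st_pair1, st_pair2.
  - destruct IHacEq1 as [A1 A2], IHacEq2 as [B1 B2]; split; intros A HgA HA; inv HA;
      try (eexists; split; [apply st_refl|]; apply ac_enc; auto using ac_sym; fail);
      [ destruct (A1 _ HgA H3) as [A' [? ?]] | destruct (B1 _ HgA H3) as [A' [? ?]]
      | destruct (A2 _ HgA H3) as [A' [? ?]] | destruct (B2 _ HgA H3) as [A' [? ?]]];
      eauto using st_enc1, st_enc2.
  - destruct IHacEq as [A1 A2]; split; intros A HgA HA; inv HA; try (simpl in HgA; contradiction);
      apply in_app_or in H3; destruct H3 as [Hi|[<-|Hi]].
    + exists A; split; [eapply st_app; [apply in_or_app; left; eauto|]; auto | apply ac_refl].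
    + destruct (A1 _ HgA H4) as [A' [? ?]]. exists A'; split; auto.
      eapply st_app; [apply in_or_app; right; left; eauto|]; auto.
    + exists A; split; [eapply st_app; [apply in_or_app; right; right; eauto|]; auto | apply ac_refl].
    + exists A; split; [eapply st_app; [apply in_or_app; left; eauto|]; auto | apply ac_refl].
    + destruct (A2 _ HgA H4) as [A' [? ?]]. exists A'; split; auto.
      eapply st_app; [apply in_or_app; right; left; eauto|]; auto.
    + exists A; split; [eapply st_app; [apply in_or_app; right; right; eauto|]; auto | apply ac_refl].
  - split; intros A HgA HA; inv HA; try (simpl in HgA; contradiction);
      exists A; split; try apply ac_refl; eapply st_app; eauto; simpl in *; tauto.
  - split; intros A HgA HA; inv HA; try (simpl in HgA; contradiction);
      exists A; (split; [|apply ac_refl]); simpl in H3; destruct H3 as [<-|[<-|[]]].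
    + eapply st_app; [left; reflexivity|]. eapply st_app; [left; reflexivity|]. auto.
    + inv H4; [simpl in HgA; contradiction|]. simpl in H3. destruct H3 as [<-|[<-|[]]].
      * eapply st_app; [left; reflexivity|]. eapply st_app; [right; left; reflexivity|]. auto.
      * eapply st_app; [right; left; reflexivity|]. auto.
    + inv H4; [simpl in HgA; contradiction|]. simpl in H3. destruct H3 as [<-|[<-|[]]].
      * eapply st_app; [left; reflexivity|]. auto.
      * eapply st_app; [right; left; reflexivity|]. eapply st_app; [left; reflexivity|]. auto.
    + eapply st_app; [right; left; reflexivity|]. eapply st_app; [right; left; reflexivity|]. auto.
Qed.


Definition goodin (G' : list tm) (t : tm) := forall A, guarded T A -> subterm T A t ->
  exists A' u, In u G' /\ subterm T A' u /\ acEq A A'.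

Definition rel (G G' : list tm) := forall t, In t G ->
  (exists t', In t' G' /\ acEq t t') \/ (id_cond T G' t /\ goodin G' t).

Lemma deriv_ok c (G : list tm) M : deriv T c G M -> Forall ok G /\ ok M.
Proof. intros H; destruct H; match goal with Hs : seq_ok _ _ _ |- _ => destruct Hs as [? [? ?]] end; split; auto; split; auto. Qed.

Lemma rel_mono G G1 G2 : rel G G1 -> incl G1 G2 -> rel G G2.
Proof.
  intros Hr Hi t Ht. destruct (Hr t Ht) as [[t' [H1 H2]]|[H1 H2]].
  - left; exists t'; auto.
  - right; split; [eapply id_mono; eauto|]. intros A Hg HA. destruct (H2 A Hg HA) as [A' [u [? [? ?]]]]. exists A', u; auto.
Qed.

Lemma rel_cons G G' a a' : rel G G' -> acEq a a' -> rel (a :: G) (a' :: G').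
Proof.
  intros Hr He t [<-|Ht].
  - left; exists a'; split; simpl; auto.
  - eapply rel_mono; eauto. intros x Hx; simpl; auto.
Qed.

Lemma principal G G' t : rel G G' -> In t G -> guarded T t -> ok t -> Forall ok G' ->
  exists t' G1, acEq t t' /\ In t' G1 /\ incl G' G1 /\ Forall ok G1 /\
    (forall Q, ok Q -> deriv T false G1 Q -> deriv T false G' Q).
Proof.
  intros Hr Hin Hg Hok HG'. destruct (Hr t Hin) as [[t' [H1 H2]]|[H1 H2]].
  - exists t', G'. repeat split; auto. apply incl_refl.
  - destruct (H2 t Hg (st_refl _ _)) as [t' [u [Hu [Hs He]]]].
    exists t', (t' :: G'). split; [auto|split; [simpl; auto|split; [intros x Hx; simpl; auto|split]]].
    + constructor; auto. eapply ok_ac; eauto.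
    + intros Q HQ D. apply d_gs with (A := t').
      * split; auto; try (destruct HQ; auto).
      * eapply guarded_ac; eauto.
      * exists u; auto.
      * apply d_id. split; auto. apply (ok_ac _ _ He Hok).
        eapply id_eq; eauto. apply eqE_sym, eqE_ac; auto.
      * exact D.
Qed.

Ltac getok D := let H := fresh "Hok" in pose proof (deriv_ok _ _ _ D) as H.

Lemma main G M : deriv T false G M -> forall G' M', rel G G' -> acEq M M' -> Forall ok G' ->
  deriv T false G' M'.
Proof.
  induction 1 as
  [ G U Hs Hid
  | G U N c Hs D1 IH1 D2 IH2
  | G a b U Hs Hin D IH
  | G a b Hs D1 IH1 D2 IH2
  | G a K U Hs Hin D1 IH1 D2 IH2
  | G a K Hs D1 IH1 D2 IH2
  | G a K L U Hs Hin1 Hin2 HKL D IH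
  | G a K Hs D1 IH1 D2 IH2
  | G a K U Hs Hin D1 IH1 D2 IH2
  | G a K Hs D1 IH1 D2 IH2
  | G a R K U Hs Hin D1 IH1 D2 IH2
  | G U A Hs Hg Hex D1 IH1 D2 IH2 ];
  intros G' U' Hr HU HG';
  (assert (HokU' : ok U') by (destruct Hs as [_ [? ?]]; eapply ok_ac; [exact HU|split; auto]));
  (assert (HsG : Forall ok G) by (destruct Hs; auto));
  (assert (Hs' : seq_ok T G' U') by (split; auto; destruct HokU'; auto)).
  -
    apply d_id; auto. eapply id_eq; [|apply eqE_sym, eqE_ac; exact HU].
    apply (id_elim G). eapply id_mono; eauto. intros x Hx; apply in_or_app; auto.
    intros t Ht. destruct (Hr t Ht) as [[t' [H1 H2]]|[H1 H2]]; auto. eapply id_mem; eauto.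
  - discriminate.
  -
    rewrite Forall_forall in HsG.
    destruct (principal _ _ _ Hr Hin I (HsG _ Hin) HG') as [t' [G1 [He [Hin' [Hi [HG1 Hstrip]]]]]].
    pose proof (shape_of _ _ He) as Sh. destruct t'; simpl in Sh; try contradiction. destruct Sh as [Ea Eb].
    getok D. destruct Hok as [Hok _]. inversion Hok; subst. inversion H2; subst.
    apply Hstrip; auto. eapply d_pL; [split; auto; destruct HokU'; auto|exact Hin'|].
    apply IH; auto. apply rel_cons; auto. apply rel_cons; auto. eapply rel_mono; eauto.
    constructor; [eapply ok_ac; eauto|constructor; [eapply ok_ac; eauto|auto]].
  -
    pose proof (shape_of _ _ HU) as Sh. destruct U'; simpl in Sh; try contradiction. destruct Sh.
    apply d_pR; auto.
  -
    rewrite Forall_forall in HsG.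
    destruct (principal _ _ _ Hr Hin I (HsG _ Hin) HG') as [t' [G1 [He [Hin' [Hi [HG1 Hstrip]]]]]].
    pose proof (shape_of _ _ He) as Sh. destruct t'; simpl in Sh; try contradiction. destruct Sh as [Ea Eb].
    getok D2. destruct Hok as [Hok _]. inversion Hok; subst. inversion H2; subst.
    apply Hstrip; auto. eapply d_eL; [split; auto; destruct HokU'; auto|exact Hin'| |].
    + apply IH1; auto. eapply rel_mono; eauto.
    + apply IH2; auto. apply rel_cons; auto. apply rel_cons; auto. eapply rel_mono; eauto.
      constructor; [eapply ok_ac; eauto|constructor; [eapply ok_ac; eauto|auto]].
  - pose proof (shape_of _ _ HU) as Sh. destruct U'; simpl in Sh; try contradiction. destruct Sh.
    apply d_eR; auto.
  -
    rewrite Forall_forall in HsG.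
    destruct (principal _ _ _ Hr Hin1 I (HsG _ Hin1) HG') as [t' [G1 [He [Hin' [Hi [HG1 Hstrip]]]]]].
    pose proof (shape_of _ _ He) as Sh. destruct t'; simpl in Sh; try contradiction. destruct Sh as [Ea Eb].
    assert (Hr1 : rel G G1) by (eapply rel_mono; eauto).
    destruct (principal _ _ _ Hr1 Hin2 I (HsG _ Hin2) HG1) as [t2 [G2 [He2 [Hin2' [Hi2 [HG2 Hstrip2]]]]]].
    pose proof (shape_of _ _ He2) as Sh. destruct t2; simpl in Sh; try contradiction.
    getok D. destruct Hok as [Hok _]. inversion Hok; subst.
    apply Hstrip; auto. apply Hstrip2; auto.
    eapply d_signL; [split; auto; destruct HokU'; auto|apply Hi2; exact Hin'|exact Hin2'| |].
    + eapply ac_trans; [apply ac_sym; exact Eb|]. eapply ac_trans; [exact HKL|exact Sh].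
    + apply IH; auto. apply rel_cons; auto. eapply rel_mono; eauto.
      constructor; [eapply ok_ac; eauto|auto].
  - pose proof (shape_of _ _ HU) as Sh. destruct U'; simpl in Sh; try contradiction. destruct Sh.
    apply d_signR; auto.
  -
    rewrite Forall_forall in HsG.
    destruct (principal _ _ _ Hr Hin I (HsG _ Hin) HG') as [t' [G1 [He [Hin' [Hi [HG1 Hstrip]]]]]].
    pose proof (shape_of _ _ He) as Sh. destruct t'; simpl in Sh; try contradiction. destruct Sh as [Ea Eb].
    getok D2. destruct Hok as [Hok _]. inversion Hok; subst. inversion H2; subst.
    apply Hstrip; auto. eapply d_blindL1; [split; auto; destruct HokU'; auto|exact Hin'| |].
    + apply IH1; auto. eapply rel_mono; eauto.
    + apply IH2; auto. apply rel_cons; auto. apply rel_cons; auto. eapply rel_mono; eauto.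
      constructor; [eapply ok_ac; eauto|constructor; [eapply ok_ac; eauto|auto]].
  - pose proof (shape_of _ _ HU) as Sh. destruct U'; simpl in Sh; try contradiction. destruct Sh.
    apply d_blindR; auto.
  -
    rewrite Forall_forall in HsG.
    destruct (principal _ _ _ Hr Hin I (HsG _ Hin) HG') as [t' [G1 [He [Hin' [Hi [HG1 Hstrip]]]]]].
    pose proof (shape_of _ _ He) as Sh. destruct t'; simpl in Sh; try contradiction. destruct Sh as [Ea Eb].
    pose proof (shape_of _ _ Ea) as Sh. destruct t'1; simpl in Sh; try contradiction. destruct Sh as [Ea1 Ea2].
    getok D2. destruct Hok as [Hok _]. inversion Hok; subst. inversion H2; subst.
    apply Hstrip; auto. eapply d_blindL2; [split; auto; destruct HokU'; auto|exact Hin'| |].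
    + apply IH1; auto. eapply rel_mono; eauto.
    + apply IH2; auto. apply rel_cons; [apply rel_cons|]; auto. eapply rel_mono; eauto.
      apply ac_sign; auto.
      constructor; [eapply ok_ac; [|exact H1]; apply ac_sign; auto|constructor; [eapply ok_ac; eauto|auto]].
  -
    getok D1. destruct Hok as [_ HokA].
    assert (Hex' : exists A', guarded T A' /\ acEq A A' /\
               exists t, (In t G' \/ t = U') /\ subterm T A' t).
    { destruct Hex as [t [[Ht| Heq] Hst]].
      - destruct (Hr t Ht) as [[t' [H1 H2]]|[H1 H2]].
        + destruct (proj1 (st_transport _ _ H2) A Hg Hst) as [A' [? ?]].
          exists A'; split; [eapply guarded_ac; eauto|split; eauto].
        + destruct (H2 A Hg Hst) as [A' [u [? [? ?]]]].
          exists A'; split; [eapply guarded_ac; eauto|split; eauto].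
      - subst t. destruct (proj1 (st_transport _ _ HU) A Hg Hst) as [A' [? ?]].
        exists A'; split; [eapply guarded_ac; eauto|split; eauto]. }
    destruct Hex' as [A' [HgA' [HA' Hex']]].
    eapply d_gs with (A := A'); eauto.
    apply IH2; auto. apply rel_cons; auto. constructor; auto. eapply ok_ac; eauto.
Qed.


Lemma subterm_trans (a b c : tm) : subterm T a b -> subterm T b c -> subterm T a c.
Proof.
  intros H1 H2; induction H2; auto.
  - apply st_pub; auto.
  - apply st_sign1; auto.
  - apply st_sign2; auto.
  - apply st_blind1; auto.
  - apply st_blind2; auto.
  - apply st_pair1; auto.
  - apply st_pair2; auto.
  - apply st_enc1; auto.
  - apply st_enc2; auto.
  - eapply st_app; eauto.
Qed.

Lemma lift_step (a t : tm) : subterm T a t -> forall a' b', acEq a a' -> cstep (rules T) a' b' ->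
  exists t' s', acEq t t' /\ cstep (rules T) t' s'.
Proof.
  induction 1; intros a' b' Ha Hc.
  - eauto.
  - destruct (IHsubterm _ _ Ha Hc) as [t0 [s0 [H1 H2]]]. exists (Pub t0), (Pub s0).
    split; [apply ac_pub|apply cs_pub]; auto.
  - destruct (IHsubterm _ _ Ha Hc) as [t0 [s0 [H1 H2]]]. exists (Sign t0 u), (Sign s0 u).
    split; [apply ac_sign; auto using ac_refl|apply cs_sign1]; auto.
  - destruct (IHsubterm _ _ Ha Hc) as [t0 [s0 [H1 H2]]]. exists (Sign t t0), (Sign t s0).
    split; [apply ac_sign; auto using ac_refl|apply cs_sign2]; auto.
  - destruct (IHsubterm _ _ Ha Hc) as [t0 [s0 [H1 H2]]]. exists (Blind t0 u), (Blind s0 u).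
    split; [apply ac_blind; auto using ac_refl|apply cs_blind1]; auto.
  - destruct (IHsubterm _ _ Ha Hc) as [t0 [s0 [H1 H2]]]. exists (Blind t t0), (Blind t s0).
    split; [apply ac_blind; auto using ac_refl|apply cs_blind2]; auto.
  - destruct (IHsubterm _ _ Ha Hc) as [t0 [s0 [H1 H2]]]. exists (Pair t0 u), (Pair s0 u).
    split; [apply ac_pair; auto using ac_refl|apply cs_pair1]; auto.
  - destruct (IHsubterm _ _ Ha Hc) as [t0 [s0 [H1 H2]]]. exists (Pair t t0), (Pair t s0).
    split; [apply ac_pair; auto using ac_refl|apply cs_pair2]; auto.
  - destruct (IHsubterm _ _ Ha Hc) as [t0 [s0 [H1 H2]]]. exists (Enc t0 u), (Enc s0 u).
    split; [apply ac_enc; auto using ac_refl|apply cs_enc1]; auto.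
  - destruct (IHsubterm _ _ Ha Hc) as [t0 [s0 [H1 H2]]]. exists (Enc t t0), (Enc t s0).
    split; [apply ac_enc; auto using ac_refl|apply cs_enc2]; auto.
  - destruct (IHsubterm _ _ Ha Hc) as [t0 [s0 [H1 H2]]].
    destruct (in_split _ _ H) as [l [r ->]].
    exists (App f (l ++ t0 :: r)), (App f (l ++ s0 :: r)).
    split; [apply ac_app|apply cs_app]; auto.
Qed.

Lemma normal_sub (a t : tm) : subterm T a t -> normal T t -> normal T a.
Proof.
  intros Hs Hn b [a' [b' [H1 [H2 H3]]]].
  destruct (lift_step _ _ Hs _ _ H1 H2) as [t' [s' [H4 H5]]].
  apply (Hn s'). exists t', s'. split; auto. split; auto. apply ac_refl.
Qed.

Lemma subterm_inst (s : nat -> tm) (p : pat F) A : guarded T A -> subterm T A (inst s p) ->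
  exists x, In x (pvars p) /\ subterm T A (s x).
Proof.
  induction p using pat_ind'; simpl; intros Hg Hs.
  - eauto.
  - inversion Hs; subst. simpl in Hg; contradiction.
    match goal with Hi : In _ (map _ _) |- _ => apply in_map_iff in Hi as [q [<- Hq]] end.
    rewrite Forall_forall in H.
    match goal with Hs' : subterm _ _ (inst _ q) |- _ => destruct (H q Hq Hg Hs') as [x [Hx Hx']] end.
    exists x; split; auto. apply in_flat_map; eauto.
Qed.

Lemma inst_sub (s : nat -> tm) (p : pat F) x : In x (pvars p) -> subterm T (s x) (inst s p).
Proof.
  induction p using pat_ind'; simpl; intros Hx.
  - destruct Hx as [<-|[]]; apply st_refl.
  - apply in_flat_map in Hx as [q [Hq Hx]]. rewrite Forall_forall in H.
    eapply st_app; [apply in_map; eauto|]. auto.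
Qed.

Definition Sub (Xs : list tm) (A : tm) := exists u, In u Xs /\ subterm T A u.
Definition good (Xs : list tm) (t : tm) := forall A, guarded T A -> subterm T A t ->
  exists A', Sub Xs A' /\ acEq A A'.

Lemma good_sub Xs (t u : tm) : good Xs t -> subterm T u t -> good Xs u.
Proof. intros H Hs A Hg HA. apply H; auto. eapply subterm_trans; eauto. Qed.

Lemma good_ac Xs (t u : tm) : acEq t u -> good Xs t -> good Xs u.
Proof.
  intros He H A Hg HA. destruct (proj2 (st_transport _ _ He) A Hg HA) as [A0 [H1 H2]].
  destruct (H A0 (guarded_ac _ _ H2 Hg) H1) as [A' [H3 H4]]. exists A'; split; eauto using ac_trans.
Qed.

Lemma good_guarded_normal Xs (t : tm) : Forall (normal T) Xs -> good Xs t -> guarded T t -> normal T t.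
Proof.
  intros HX H Hg. destruct (H t Hg (st_refl _ _)) as [A' [[u [Hu Hs]] He]].
  rewrite Forall_forall in HX. eapply normal_ac; [apply ac_sym; exact He|].
  eapply normal_sub; eauto.
Qed.

Lemma step_good Xs (t u : tm) : Forall (normal T) Xs -> cstep (rules T) t u -> good Xs t ->
  exists u0, cstep (rules T) t u0 /\ good Xs u0.
Proof.
  intros HX Hc. induction Hc; intros Hgood;
    try (exfalso; refine (good_guarded_normal _ _ HX Hgood I _ _);
         do 2 eexists; split; [apply ac_refl|split; [constructor; eassumption|apply ac_refl]]).
  - set (s' := fun x => if in_dec Nat.eq_dec x (pvars l) then s x else inst s l).
    exists (inst s' r). split.
    + replace (inst s l) with (inst s' l) by (apply inst_ext; intros i Hi; unfold s';
        destruct in_dec; [auto|contradiction]).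
      apply cs_root; auto.
    + intros A Hg HA. destruct (subterm_inst _ _ _ Hg HA) as [x [Hx Hs]].
      apply Hgood; auto. unfold s' in Hs. destruct in_dec; auto.
      eapply subterm_trans; [exact Hs|]. apply inst_sub; auto.
  - destruct IHHc as [b0 [H1 H2]].
    { eapply good_sub; eauto. eapply st_app; [apply in_or_app; right; left; reflexivity|apply st_refl]. }
    exists (App f (l ++ b0 :: r)). split; [apply cs_app; auto|].
    intros A Hg HA. inversion HA; subst; [simpl in Hg; contradiction|].
    match goal with Hi : In _ (_ ++ _) |- _ => apply in_app_or in Hi; destruct Hi as [Hi|[<-|Hi]] end.
    + apply Hgood; auto. eapply st_app; [apply in_or_app; left; eauto|auto].
    + apply H2; auto.
    + apply Hgood; auto. eapply st_app; [apply in_or_app; right; right; eauto|auto].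
Qed.


Lemma nf_exists Xs : Forall (normal T) Xs -> terminating_AC T (rules T) ->
  forall t, good Xs t -> exists N0, clos_refl_trans _ (rstep T (rules T)) t N0 /\ normal T N0 /\ good Xs N0.
Proof.
  intros HX Hterm t. induction t as [t IH] using (well_founded_induction Hterm). intros Hg.
  destruct (classic (normal T t)) as [Hn|Hn].
  - exists t; split; [apply rt_refl|auto].
  - unfold normal in Hn. apply not_all_ex_not in Hn as [s Hs]. apply NNPP in Hs.
    destruct Hs as [t' [s' [H1 [H2 H3]]]].
    destruct (step_good _ _ _ HX H2 (good_ac _ _ _ H1 Hg)) as [u0 [Hc Hg0]].
    assert (Hr : rstep T (rules T) t u0) by (exists t', u0; split; auto; split; auto; apply ac_refl).
    destruct (IH u0 Hr Hg0) as [N0 [? [? ?]]]. exists N0; split; auto.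
    eapply rt_trans; [apply rt_step; exact Hr|auto].
Qed.

Lemma normal_rt (N y : tm) : normal T N -> clos_refl_trans _ (rstep T (rules T)) N y -> y = N.
Proof.
  intros Hn H. induction H; auto.
  - exfalso; eapply Hn; eauto.
  - specialize (IHclos_refl_trans1 Hn). subst. auto.
Qed.

Lemma rt_eqE (t u : tm) : clos_refl_trans _ (rstep T (rules T)) t u -> eqE t u.
Proof.
  induction 1.
  - destruct H as [t' [s' [H1 [H2 H3]]]].
    eapply eqE_trans; [apply eqE_ac; eauto|]. eapply eqE_trans; [apply eqE_cs; eauto|]. apply eqE_ac; auto.
  - apply eqE_refl.
  - eapply eqE_trans; eauto.
Qed.

Lemma map_nth_seq (d : tm) l : map (fun j => nth j l d) (seq 0 (length l)) = l.
Proof.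
  induction l as [|a l IH]; simpl; auto. f_equal. rewrite <- seq_shift, map_map. simpl. auto.
Qed.

End S.

Theorem lemma3 (T : theory) (Xs : list (term (sym T))) (f : sym T)
    (G : list (term (sym T))) (M N : term (sym T)) :
  admissible T ->
  length Xs = ar T f ->
  Forall (fun X => wf T X /\ normal T X) Xs ->
  is_nf T (App f Xs) N ->
  deriv T false (N :: G) M ->
  deriv T false (Xs ++ G) M.
Proof.
  intros [_ [_ [_ [Hterm Hconf]]]] Hlen HX [Hrt Hn] D.
  assert (HXn : Forall (normal T) Xs) by (eapply Forall_impl; [|exact HX]; simpl; tauto).
  assert (Hgood0 : good T Xs (App f Xs)).
  { intros A Hg HA. inversion HA; subst; [simpl in Hg; contradiction|].
    exists A; split; [eexists; split; eauto|apply ac_refl]. }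
  destruct (nf_exists _ _ HXn Hterm _ Hgood0) as [N0 [Hrt0 [Hn0 Hg0]]].
  destruct (Hconf _ _ _ Hrt Hrt0) as [u1 [u2 [H1 [H2 H3]]]].
  apply normal_rt in H1; auto. apply normal_rt in H2; auto. subst.
  assert (HgN : good T Xs N) by (eapply good_ac; [apply ac_sym; exact H3|exact Hg0]).
  destruct (deriv_ok _ _ _ _ D) as [HG _].
  eapply main; [exact D| | apply ac_refl|].
  - intros t [<-|Ht].
    + right. split.
      * exists (PApp f (map PVar (seq 0 (length Xs)))), (fun j => nth j Xs (Name 0)).
        split; [|split].
        -- simpl. split; [rewrite length_map, length_seq; auto|].
           apply fold_conj_Forall. apply Forall_forall. intros q Hq. apply in_map_iff in Hq as [j [<- _]]. exact I.
        -- intros i Hi. simpl in Hi. apply in_flat_map in Hi as [q [Hq Hi]].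
           apply in_map_iff in Hq as [j [<- Hj]]. simpl in Hi. destruct Hi as [<-|[]].
           apply in_seq in Hj. apply in_or_app; left. apply nth_In. lia.
        -- simpl. rewrite map_map. simpl. rewrite map_nth_seq. apply eqE_sym, rt_eqE; auto.
      * intros A Hg HA. destruct (HgN A Hg HA) as [A' [[u [Hu Hs]] He]].
        exists A', u. split; [apply in_or_app; auto|auto].
    + left. exists t. split; [apply in_or_app; auto|apply ac_refl].
  - inversion HG; subst. apply Forall_app; split; auto.
Qed.
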